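(* Let $0<r_j<\infty$ and $0<s_j<\infty$ for $j=1,\dots,n$, let $\rho=\otimes_{j=1}^n\gamma(r_j)$ and $\sigma=\otimes_{j=1}^n\gamma(s_j)$. Let $\alpha>1$ and let $V_{\sigma(\alpha-1)}$ and $V_{\rho(\alpha)}$ denote the covariance matrices of the gaussian states $\sigma^{\alpha-1}/\operatorname{tr}\sigma^{\alpha-1}$ and $\rho^\alpha/\operatorname{tr}\rho^\alpha$ respectively. Then $D_\alpha(\rho\|\sigma)<\infty\iff V_{\sigma(\alpha-1)}>V_{\rho(\alpha)}$.
   Context: One-mode Fock space: $\ell^2(\mathbb{Z}_{\ge 0})$ with orthonormal particle basis $\{|k\rangle\}$; $n$-mode space is the $n$-fold tensor product. For $0<s<\infty$, $\gamma(s)=(1-e^{-s})\sum_{k\ge0}e^{-ks}|k\rangle\langle k|$. For $\beta>0$, $\gamma(\mathbf{s})^\beta/\operatorname{tr}\gamma(\mathbf{s})^\beta=\otimes_j\gamma(\beta s_j)$, and the covariance matrix of $\otimes_j\gamma(t_j)$ is $\frac12\operatorname{diag}(\coth\frac{t_1}{2},\dots,\coth\frac{t_n}{2})\otimes I_2$. $A>B$ means $A-B$ is positive definite. For states $\rho=\sum_i p_i|x_i\rangle\langle x_i|$, $\sigma=\sum_j q_j|y_j\rangle\langle y_j|$ (spectral decompositions), $D_\alpha(\rho\|\sigma)=\frac{1}{\alpha-1}\log\sum_{i,j}p_i^\alpha q_j^{1-\alpha}|\langle x_i|y_j\rangle|^2$. *)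

(* Defs.v *)
From HB Require Import structures.
From mathcomp Require Import all_boot all_order all_algebra.
From mathcomp Require Import all_classical all_reals all_analysis.
From mathcomp Require Import mxtens.
Set Implicit Arguments. Unset Strict Implicit. Unset Printing Implicit Defensive.
Import Order.TTheory GRing.Theory Num.Theory.
Local Open Scope ring_scope.

(* Orthonormal particle basis of the n-mode Fock space: |k> with k : 'I_n -> nat. *)
Definition fock_index (n : nat) := {ffun 'I_n -> nat}.

(* |<k|l>|^2 for basis vectors of the n-mode Fock space (orthonormal basis). *)
Definition fock_overlap2 {R : realType} (n : nat) (k l : fock_index n) : R :=
  (k == l)%:R.

(* Eigenvalue of gamma(t) = (1 - e^{-t}) sum_k e^{-k t} |k><k| on |k>. *)
Definition gamma_eig {R : realType} (t : R) (k : nat) : R :=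
  (1 - expR (- t)) * expR (- (k%:R * t)).

(* Eigenvalue of (tensor_j gamma(t_j)) on the basis vector |k> = tensor_j |k_j>;
   the spectral decomposition of this state is in the Fock basis. *)
Definition prod_gamma_eig {R : realType} (n : nat) (t : 'I_n -> R)
  (k : fock_index n) : R := \prod_(j < n) gamma_eig (t j) (k j).

(* D_alpha for states rho = sum_i p_i |x_i><x_i|, sigma = sum_j q_j |y_j><y_j|,
   given the eigenvalues p, q and overlaps ov i j = |<x_i|y_j>|^2:
   D_alpha = 1/(alpha-1) log sum_{i,j} p_i^alpha q_j^(1-alpha) |<x_i|y_j>|^2,
   valued in the extended reals (+oo when the sum diverges). *)
Definition renyi_sum {R : realType} {I J : choiceType} (p : I -> R) (q : J -> R)
  (ov : I -> J -> R) (a : R) : \bar R :=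
  \esum_(ij in [set: I * J]) ((p ij.1 `^ a) * (q ij.2 `^ (1 - a))
                                 * ov ij.1 ij.2)%:E.

Definition renyi_div {R : realType} {I J : choiceType} (p : I -> R) (q : J -> R)
  (ov : I -> J -> R) (a : R) : \bar R :=
  let S := renyi_sum p q ov a in
  if S == +oo%E then +oo%E else ((a - 1)^-1 * ln (fine S))%:E.

Definition renyi_prod_gamma {R : realType} (n : nat) (r s : 'I_n -> R) (a : R)
  : \bar R :=
  renyi_div (prod_gamma_eig r) (prod_gamma_eig s) (@fock_overlap2 R n) a.

Definition coth {R : realType} (x : R) : R :=
  (expR x + expR (- x)) / (expR x - expR (- x)).

Definition cov_prod_gamma {R : realType} (n : nat) (t : 'I_n -> R)
  : 'M[R]_(n * 2) :=
  diag_mx (\row_(j < n) (2^-1 * coth (t j / 2))) *t (1%:M : 'M[R]_2).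

Definition mx_gt {R : realType} (m : nat) (A B : 'M[R]_m) : Prop :=
  forall v : 'rV[R]_m, v != 0 -> 0 < (v *m (A - B) *m v^T) 0 0.

(* Main.v *)
Require Import Defs.
From HB Require Import structures.
From mathcomp Require Import all_boot all_order all_algebra.
From mathcomp Require Import all_classical all_reals all_analysis.
From mathcomp Require Import mxtens.
From mathcomp Require Import ring lra.
Import Order.TTheory GRing.Theory Num.Theory.

From mathcomp Require Import finmap.
Module CovH.
Local Open Scope ring_scope.
Section Cov.
Variable R : realType.

Lemma coth_lt (a b : R) : 0 < b -> b < a -> coth a < coth b.
Proof.
move=> b0 ba; rewrite /coth !expRN.
have q1 : 1 < expR b by rewrite -expR0 ltr_expR.
have pq : expR b < expR a by rewrite ltr_expR.
set p := expR a in pq *; set q := expR b in q1 pq *.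
have p1 : 1 < p by apply: lt_trans q1 pq.
have e : forall x : R, 1 < x -> (x + x^-1) / (x - x^-1) = (x^+2 + 1) / (x^+2 - 1).
  move=> x x1; have x0 : x != 0 by rewrite gt_eqF // (lt_trans ltr01).
  have h1 : x^+2 - 1 != 0 by rewrite subr_eq0 gt_eqF // expr_gt1 //; lra.
  have h2 : x - x^-1 != 0.
    have -> : x - x^-1 = (x^+2 - 1) / x by field.
    by rewrite mulf_neq0 // invr_eq0.
  by field; rewrite ?x0 ?h1 ?h2.
rewrite !e //.
have hq : 0 < q^+2 - 1 by rewrite subr_gt0 expr_gt1 //; lra.
have hp : 0 < p^+2 - 1 by rewrite subr_gt0 expr_gt1 //; lra.
rewrite ltr_pdivrMr // mulrAC ltr_pdivlMr //.
nra.
Qed.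

Lemma coth_ltE (a b : R) : 0 < a -> 0 < b -> (coth a < coth b) = (b < a).
Proof.
move=> a0 b0; apply/idP/idP; last exact: coth_lt.
apply: contraLR; rewrite -!leNgt le_eqVlt => /orP[/eqP->//|ab].
exact/ltW/coth_lt.
Qed.

Lemma cov_diff n (t1 t2 : 'I_n -> R) :
  cov_prod_gamma t1 - cov_prod_gamma t2 =
  diag_mx (\row_i (2^-1 * coth (t1 (mxtens_unindex i).1 / 2)
                  - 2^-1 * coth (t2 (mxtens_unindex i).1 / 2))).
Proof.
apply/matrixP => i i'; rewrite !mxE.
have [<-|ne] := eqVneq i i'; first by rewrite !eqxx /= ?mulr1n ?mulr1.
have : mxtens_unindex i != mxtens_unindex i'.
  by apply: contra ne => /eqP/(can_inj (@mxtens_unindexK _ _)) ->.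
case: (mxtens_unindex i) => a b; case: (mxtens_unindex i') => a' b' /=.
rewrite xpair_eqE negb_and => /orP[] /negPf ->; rewrite ?mulr0n ?mul0r ?mulr0 ?subrr //.
Qed.

Lemma quad_diag m (v : 'rV[R]_m) (w : 'rV[R]_m) :
  (v *m diag_mx w *m v^T) 0 0 = \sum_i v 0 i ^+ 2 * w 0 i.
Proof.
rewrite mul_mx_diag !mxE; apply: eq_bigr => i _; rewrite !mxE; ring.
Qed.

Lemma mx_gt_cov n (t1 t2 : 'I_n -> R) :
  (forall j, 0 < t1 j) -> (forall j, 0 < t2 j) ->
  mx_gt (cov_prod_gamma t1) (cov_prod_gamma t2) <-> (forall j, t1 j < t2 j).
Proof.
move=> h1 h2; rewrite /mx_gt cov_diff.
have key j : (0 < 2^-1 * coth (t1 j / 2) - 2^-1 * coth (t2 j / 2)) = (t1 j < t2 j).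
  rewrite subr_gt0 ltr_pM2l ?invr_gt0 ?ltr0n // coth_ltE ?divr_gt0 ?ltr0n //.
  by rewrite ltr_pM2r ?invr_gt0 ?ltr0n.
split.
- move=> H j; rewrite -key.
  pose v : 'rV[R]_(n * 2) := delta_mx 0 (mxtens_index (j, ord0)).
  have v0 : v != 0.
    apply/negP => /eqP/matrixP/(_ 0 (mxtens_index (j, ord0))).
    by rewrite !mxE !eqxx /= => /eqP; rewrite oner_eq0.
  move: (H v v0); rewrite quad_diag (bigD1 (mxtens_index (j, ord0))) //= big1.
    have E : (mxtens_unindex (mxtens_index (j, ord0) : 'I_(n*2))).1 = j by rewrite mxtens_indexK.
    move: E => /= E.
    by rewrite addr0 [v _ _]mxE !eqxx expr1n mul1r mxE E.
  by move=> i ne; rewrite !mxE eqxx /= (negPf ne) /= expr0n /= mul0r.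
- move=> H v v0; rewrite quad_diag.
  have [i vi] : exists i, v 0 i != 0.
    apply/existsP; apply: contraR v0 => /existsPn hv; apply/eqP/matrixP => a b.
    by rewrite ord1 mxE; apply/eqP; move: (hv b); rewrite negbK.
  rewrite (bigD1 i) //=; apply: ltr_wpDr.
  + by apply: sumr_ge0 => k _; rewrite mxE mulr_ge0 ?sqr_ge0 // ltW ?key ?H.
  + by rewrite mxE mulr_gt0 ?key ?H // exprn_even_gt0.
Qed.
End Cov.
End CovH.
Module EsumH.
Local Open Scope classical_set_scope.
Local Open Scope ring_scope.
Section Esum.
Variable R : realType.

Lemma powR_prod (I : finType) (f : I -> R) (a : R) :
  (forall i, 0 <= f i) -> (\prod_i f i) `^ a = \prod_i (f i `^ a).
Proof.
move=> f0.
have K1 : 0 <= (1 : R) /\ (1 : R) `^ a = 1 by rewrite powR1.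
have K2 : forall x1 y1 x2 y2 : R, 0 <= x1 /\ x1 `^ a = y1 -> 0 <= x2 /\ x2 `^ a = y2 ->
   0 <= x1 * x2 /\ (x1 * x2) `^ a = y1 * y2.
  move=> x1 y1 x2 y2 [h1 e1] [h2 e2]; split; first exact: mulr_ge0.
  by rewrite powRM // e1 e2.
have := @big_ind2 R R (fun x y => 0 <= x /\ x `^ a = y) 1 *%R 1 *%R K1 K2 I (index_enum I) xpredT f (fun i => f i `^ a).
by case=> // i _; split.
Qed.

Variables (n : nat) (r s : 'I_n -> R) (alpha : R).
Hypotheses (hr : forall j, 0 < r j) (hs : forall j, 0 < s j).

Definition cc j := (1 - expR (- r j)) `^ alpha * (1 - expR (- s j)) `^ (1 - alpha).
Definition xx j := expR (- (alpha * r j - (alpha - 1) * s j)).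
Definition hh (k : fock_index n) := \prod_j (cc j * xx j ^+ k j).

Lemma gamma_eig_ge0 t m : 0 < t -> 0 <= gamma_eig t m :> R.
Proof.
move=> t0; rewrite /gamma_eig mulr_ge0 // ?expR_ge0 // subr_ge0.
by rewrite -expR0 ler_expR oppr_le0 ltW.
Qed.

Lemma term_eq k :
  prod_gamma_eig r k `^ alpha * prod_gamma_eig s k `^ (1 - alpha) = hh k.
Proof.
rewrite /prod_gamma_eig !powR_prod; last 2 first.
- by move=> j; apply: gamma_eig_ge0.
- by move=> j; apply: gamma_eig_ge0.
rewrite -big_split; apply: eq_bigr => j _ /=.
have g0 t : 0 < t -> 0 <= 1 - expR (- t) :> R.
  by move=> t0; rewrite subr_ge0 -expR0 ler_expR oppr_le0 ltW.
rewrite /gamma_eig !powRM ?expR_ge0 ?g0 // -!expRM /cc /xx -expRM_natl.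
rewrite mulrACA; congr (_ * _); rewrite -expRD; congr expR; ring.
Qed.

Lemma hh_ge0 k : 0 <= hh k.
Proof.
apply: prodr_ge0 => j _; apply: mulr_ge0; last by rewrite exprn_ge0 ?expR_ge0.
by rewrite mulr_ge0 ?powR_ge0.
Qed.

Lemma esum_red :
  renyi_sum (prod_gamma_eig r) (prod_gamma_eig s) (@fock_overlap2 R n) alpha
  = \esum_(k in [set: fock_index n]) (hh k)%:E.
Proof.
rewrite /renyi_sum.
have -> : [set: fock_index n * fock_index n] = [set: fock_index n] `*`` (fun=> [set: fock_index n]).
  by apply/seteqP; split.
pose F := fun (k l : fock_index n) => ((prod_gamma_eig r k `^ alpha) * (prod_gamma_eig s l `^ (1 - alpha)) * (@fock_overlap2 R n k l))%:E.
rewrite -(@esum_esum R _ _ setT (fun=> setT) F); last first.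
  move=> i j _ _; rewrite /F lee_fin mulr_ge0 ?mulr_ge0 ?powR_ge0 //.
apply: eq_esum => k _; rewrite /F.
rewrite (esumID [set k]); last first.
  move=> l _; rewrite lee_fin mulr_ge0 ?mulr_ge0 ?powR_ge0 //.
rewrite setTI esum_set1 /=; last first.
  by rewrite lee_fin mulr_ge0 ?mulr_ge0 ?powR_ge0 // ?/fock_overlap2 ?ler0n.
rewrite esum1 ?adde0; last first.
  move=> l [_ /= nl]; rewrite /fock_overlap2.
  have -> : (k == l) = false by apply/negP => /eqP e; apply: nl.
  by rewrite mulr0.
by rewrite /fock_overlap2 eqxx mulr1 term_eq.
Qed.


Lemma geo_le (x : R) (M : nat) : 0 <= x < 1 -> \sum_(m < M) x ^+ m <= (1 - x)^-1.
Proof.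
case/andP=> x0 x1.
have e : (\sum_(m < M) x ^+ m) * (1 - x) = 1 - x ^+ M.
  elim: M => [|M IH]; first by rewrite big_ord0 mul0r expr0 subrr.
  by rewrite big_ord_recr /= mulrDl IH exprS; ring.
have h : 0 < 1 - x by rewrite subr_gt0.
rewrite -(ler_pM2r h) e mulVf ?gt_eqF //.
by rewrite gerBl exprn_ge0.
Qed.

Lemma cc_gt0 j : 0 < cc j.
Proof.
have g0 t : 0 < t -> 0 < 1 - expR (- t) :> R.
  by move=> t0; rewrite subr_gt0 -expR0 ltr_expR oppr_lt0.
by rewrite /cc mulr_gt0 // powR_gt0 // g0.
Qed.

Local Open Scope ereal_scope.

Lemma esum_ub : (forall j, xx j < 1)%R ->
  \esum_(k in [set: fock_index n]) (hh k)%:E <= (\prod_j (cc j / (1 - xx j)))%:E.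
Proof.
move=> x1; apply: ge_ereal_sup => _ [X [finX _] <-].
pose M := (\max_(k <- finmap.enum_fset (fset_set X)) \max_(j < n) k j)%N.+1.
pose emb (b : {ffun 'I_n -> 'I_M}) : fock_index n := [ffun j => nat_of_ord (b j)].
have XY : {subset X <= emb @` [set: {ffun 'I_n -> 'I_M}]}.
  move=> k /set_mem Xk; apply/mem_set.
  have ltk j : (k j < M)%N.
    rewrite ltnS; apply: (@leq_trans (\max_(j < n) k j)).
      exact: (@leq_bigmax _ (fun j => k j) j).
    apply: (@leq_bigmax_seq _ _ xpredT (fun k : fock_index n => \max_(j < n) k j)) => //.
    by rewrite in_fset_set //; apply/mem_set.
  exists [ffun j => inord (k j)] => //.
  by apply/ffunP => j; rewrite !ffunE inordK.
apply: le_trans (lee_fsum_nneg_subset finX (finite_image emb finite_finset) XY _) _.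
  by move=> t _; rewrite lee_fin hh_ge0.
rewrite fsbig_image; last by move=> b b' _ _ /ffunP e; apply/ffunP => j; apply/val_inj; move: (e j); rewrite !ffunE.
have -> : [set: {ffun 'I_n -> 'I_M}] = [set` enum {ffun 'I_n -> 'I_M}].
  by apply/seteqP; split => // b _ /=; rewrite mem_enum.
rewrite -fsbig_seq ?enum_uniq // big_enum /= sumEFin lee_fin.
rewrite /hh.
have -> : (\sum_(i : {ffun 'I_n -> 'I_M}) \prod_j (cc j * xx j ^+ emb i j) =
   \prod_j \sum_(m : 'I_M) (cc j * xx j ^+ m))%R.
  rewrite bigA_distr_bigA; apply: eq_bigr => b _; apply: eq_bigr => j _.
  by rewrite ffunE.
apply: ler_prod => j _; apply/andP; split.
  by apply: sumr_ge0 => m _; rewrite mulr_ge0 ?exprn_ge0 ?expR_ge0 // ltW // cc_gt0.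
rewrite -mulr_sumr ler_pM2l ?cc_gt0 //.
by apply: geo_le; rewrite x1 andbT /xx expR_ge0.
Qed.


Lemma esum_inf j0 : (1 <= xx j0)%R ->
  \esum_(k in [set: fock_index n]) (hh k)%:E = +oo.
Proof.
move=> xj0.
have C0 : (0 < \prod_j cc j)%R by apply: prodr_gt0 => j _; exact: cc_gt0.
have lb : forall N : nat, ((N%:R * \prod_j cc j)%:E <= \esum_(k in [set: fock_index n]) (hh k)%:E).
  move=> N; apply: esum_ge.
  pose e (m : nat) : fock_index n := [ffun j => if j == j0 then m else 0%N].
  exists (e @` `I_N).
    by split; [exact: finite_image (finite_II N) | by []].
  rewrite fsbig_image; last by move=> a b _ _ /ffunP/(_ j0); rewrite !ffunE eqxx.
  rewrite -fsbig_ord sumEFin lee_fin.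
  apply: (@le_trans _ _ (\sum_(m < N) \prod_j cc j)%R).
    by rewrite sumr_const card_ord mulr_natl.
  apply: ler_sum => m _; rewrite /hh; apply: ler_prod => j _; apply/andP; split; first exact: (ltW (cc_gt0 j)).
  apply: ler_peMr; first exact: (ltW (cc_gt0 j)).
  rewrite ffunE; case: eqP => [->|_]; last by rewrite expr0.
  exact: exprn_ege1.
have S0 : 0 <= \esum_(k in [set: fock_index n]) (hh k)%:E.
  by apply: esum_ge0 => k _; rewrite lee_fin hh_ge0.
move: S0 lb; move: (\esum_(k in [set: fock_index n]) (hh k)%:E) => S.
case: S => [y||] // S0 lb.
have := lb (Num.Def.trunc (y / \prod_j cc j)).+1; rewrite lee_fin => h.
have := truncnS_gt (y / \prod_j cc j); rewrite ltr_pdivrMr // => h2.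
by have := lt_le_trans h2 h; rewrite ltxx.
Qed.

End Esum.
End EsumH.
Import CovH EsumH.
Arguments xx {R n}. Arguments cc {R n}. Arguments hh {R n}.
Arguments esum_red {R n r s alpha}. Arguments esum_ub {R n r s alpha}. Arguments esum_inf {R n r s alpha}.
Local Open Scope ring_scope.

Theorem proposition3p6 (R : realType) (n : nat) (r s : 'I_n -> R) (alpha : R)
  (hr : forall j, 0 < r j) (hs : forall j, 0 < s j) (halpha : 1 < alpha) :
  (renyi_prod_gamma r s alpha < +oo)%E <->
  mx_gt (cov_prod_gamma (fun j => (alpha - 1) * s j))
        (cov_prod_gamma (fun j => alpha * r j)).
Proof.
rewrite mx_gt_cov; last 2 first.
- by move=> j; rewrite mulr_gt0 // subr_gt0.
- by move=> j; rewrite mulr_gt0 // (lt_trans ltr01).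
rewrite /renyi_prod_gamma /renyi_div (esum_red hr hs).
have xx_iff j : (xx r s alpha j < 1) = ((alpha - 1) * s j < alpha * r j).
  by rewrite /xx -expR0 ltr_expR oppr_lt0 subr_gt0.
have [H|H] := pselect (forall j, xx r s alpha j < 1).
- have ub := esum_ub hr hs H.
  have -> : (\esum_(k in [set: fock_index n]) (hh r s alpha k)%:E == +oo)%E = false.
    by apply/negP => /eqP e; move: ub; rewrite e leye_eq.
  by split=> [_ j|_]; [rewrite -xx_iff; exact: H | exact: ltry].
- have [j0 hj0] : exists j0, ~ (xx r s alpha j0 < 1).
    by apply/existsNP => H'; apply: H.
  rewrite (esum_inf hr hs j0) ?eqxx; last by rewrite leNgt; apply/negP.
  split=> // H'; exfalso; apply: H => j; rewrite xx_iff; exact: H'.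
Qed.
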